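(* For both the JC model and the K2P model, the linear polynomial $f=q_{GGGG}+q_{GTGT}-q_{GGTT}-q_{GTTG}$ satisfies $f\in\mathcal{I}(V_{T_{12|34}}\ast V_{T_{14|23}})\setminus\mathcal{I}(V_{T_{13|24}})$.
   Context: $T_{12|34}$, $T_{13|24}$, $T_{14|23}$ denote the three unrooted binary trees on leaves $\{1,2,3,4\}$, indexed by their nontrivial split; $\Sigma(T)$ is the set of all splits of $T$ (four trivial plus the nontrivial one). With $G=\mathbb{Z}_2\times\mathbb{Z}_2$ and nucleotide labels $A=(0,0)$, $C=(0,1)$, $G=(1,0)$, $T=(1,1)$, the K3P model on $T$ in Fourier coordinates $q_{g_1g_2g_3g_4}$ ($g_i\in G$) is $q_{g_1g_2g_3g_4}=\prod_{A|B\in\Sigma(T)}a^{A|B}_{\sum_{i\in A}g_i}$ if $\sum_i g_i=0$ and $0$ otherwise; K2P imposes $a^e_G=a^e_T$ and JC imposes $a^e_C=a^e_G=a^e_T$ for all splits $e$. $V_T$ is the Zariski closure in $\mathbb{P}^{255}$ of the image for complex parameters; $V\ast W$ is the join (closure of all lines meeting $V$ and $W$); $\mathcal{I}(V)$ is the ideal of polynomials in the $q$'s vanishing on $V$. *)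

(* Defs.v *)
From HB Require Import structures.
From mathcomp Require Import all_boot all_order all_algebra.
From mathcomp Require Import reals complex.
From mathcomp Require Import mpoly.

Set Implicit Arguments.
Unset Strict Implicit.
Unset Printing Implicit Defensive.

Import GRing.Theory Num.Theory.
Local Open Scope ring_scope.

Definition grp := (bool * bool)%type.
Definition gadd (x y : grp) : grp := (x.1 (+) y.1, x.2 (+) y.2).
Definition gzero : grp := (false, false).
Definition nA : grp := (false, false).
Definition nC : grp := (false, true).
Definition nG : grp := (true, false).
Definition nT : grp := (true, true).
Definition gval (x : grp) : nat := 2 * x.1 + x.2.

Definition gsum (A : {set 'I_4}) (g : 'I_4 -> grp) : grp :=
  foldr gadd gzero [seq g i | i <- enum A].

(* ---------- Fourier coordinates q_{g1 g2 g3 g4}, indexed by 'I_256 ----------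
   leaves 1,2,3,4 are 'I_4 elements 0,1,2,3; the coordinate q_{g1g2g3g4} is
   variable number 64 v(g1) + 16 v(g2) + 4 v(g3) + v(g4) with v = gval. *)
Definition qidx (g1 g2 g3 g4 : grp) : 'I_256 :=
  inord (64 * gval g1 + 16 * gval g2 + 4 * gval g3 + gval g4).

Definition nuc_of (d : nat) : grp := (odd (d %/ 2), odd d).

Definition qdec (k : 'I_256) (i : 'I_4) : grp :=
  nuc_of ((k %/ 4 ^ (3 - i)) %% 4).

Inductive tree := T12_34 | T13_24 | T14_23.

Definition leaf (i : nat) : 'I_4 := inord i.

Definition nt_split (T : tree) : {set 'I_4} :=
  match T with
  | T12_34 => [set leaf 0; leaf 1]
  | T13_24 => [set leaf 0; leaf 2]
  | T14_23 => [set leaf 0; leaf 3]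
  end.

(* Sigma(T): the four trivial splits and the nontrivial one, each split A|B
   represented by its side A (the value sum_{i in A} g_i does not depend on
   the side when sum_i g_i = 0). *)
Definition splits (T : tree) : seq {set 'I_4} :=
  [:: [set leaf 0]; [set leaf 1]; [set leaf 2]; [set leaf 3]; nt_split T].

Inductive model := JC | K2P.

Definition model_params (C : ringType) (M : model)
  (a : {set 'I_4} -> grp -> C) : Prop :=
  match M with
  | K2P => forall e, a e nG = a e nT
  | JC => forall e, a e nC = a e nG /\ a e nG = a e nT
  end.

Definition param (C : ringType) (T : tree) (a : {set 'I_4} -> grp -> C)
  : 'I_256 -> C :=
  fun k => if gsum setT (qdec k) == gzero
           then \prod_(A <- splits T) a A (gsum A (qdec k))
           else 0.

(* ---------- affine geometry in C^256 ----------
   A projective variety in P^255 is represented by its affine cone in C^256. *)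
Definition pt (C : ringType) := 'I_256 -> C.

Definition vanishes_on (C : comRingType) (p : {mpoly C[256]}) (S : pt C -> Prop)
  : Prop := forall x, S x -> p.@[x] = 0.

Definition ideal_of (C : comRingType) (S : pt C -> Prop) (p : {mpoly C[256]})
  : Prop := vanishes_on p S.

Definition zclosure (C : comRingType) (S : pt C -> Prop) : pt C -> Prop :=
  fun x => forall p : {mpoly C[256]}, vanishes_on p S -> p.@[x] = 0.

Definition cone (C : ringType) (S : pt C -> Prop) : pt C -> Prop :=
  fun x => exists (l : C) (y : pt C), S y /\ x = (fun k => l * y k).

Definition VT (C : comRingType) (M : model) (T : tree) : pt C -> Prop :=
  zclosure (cone (fun x => exists a, model_params M a /\ x = param T a)).

(* affine cone of the join V * W: closure of the union of the lines joining
   points of V and W, i.e. closure of { v + w | v in cone V, w in cone W } *)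
Definition join (C : comRingType) (V W : pt C -> Prop) : pt C -> Prop :=
  zclosure (fun x => exists v w, V v /\ W w /\ x = (fun k => v k + w k)).

Definition flin (C : comRingType) : {mpoly C[256]} :=
  'X_(qidx nG nG nG nG) + 'X_(qidx nG nT nG nT)
  - 'X_(qidx nG nG nT nT) - 'X_(qidx nG nT nT nG).

(* Main.v *)
Require Import Defs.
From HB Require Import structures.
From mathcomp Require Import all_boot all_order all_algebra.
From mathcomp Require Import reals complex.
From mathcomp Require Import mpoly.
From mathcomp Require Import ring.
From Stdlib Require Import FunctionalExtensionality.
Import GRing.Theory Num.Theory.
Set Implicit Arguments.
Local Open Scope ring_scope.
Local Open Scope complex_scope.

Lemma foldg_odd (s : seq 'I_4) (g : 'I_4 -> grp) :
  foldr gadd gzero [seq g i | i <- s] =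
  (odd (count (fun i => (g i).1) s), odd (count (fun i => (g i).2) s)).
Proof.
elim: s => [//|x s IH] /=; rewrite IH /gadd /= !oddD.
by case: (g x) => [[] []].
Qed.

Lemma gsum_perm (S : {set 'I_4}) s g : perm_eq (enum S) s ->
  gsum S g = foldr gadd gzero [seq g i | i <- s].
Proof. by move=> /permP H; rewrite /gsum !foldg_odd !H. Qed.

Lemma gsum1 a g : gsum [set a] g = gadd (g a) gzero.
Proof. by rewrite /gsum enum_set1. Qed.

Lemma gsum2 a b g : a != b -> gsum [set a; b] g = gadd (g a) (gadd (g b) gzero).
Proof.
move=> ab; apply: (@gsum_perm _ [:: a; b]).
apply: perm_trans (enum_setU _ _) _.
by rewrite !enum_set1 /= inE (negbTE ab).
Qed.

Lemma gsumT g : gsum setT g = foldr gadd gzero [seq g i | i <- enum 'I_4].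
Proof. by rewrite /gsum enum_setT -enumT. Qed.

Lemma qdecE g1 g2 g3 g4 i : qdec (qidx g1 g2 g3 g4) i =
  nuc_of (((64 * gval g1 + 16 * gval g2 + 4 * gval g3 + gval g4) %/ 4 ^ (3 - i)) %% 4).
Proof.
rewrite /qdec /qidx inordK //.
by case: g1 => [[] []]; case: g2 => [[] []]; case: g3 => [[] []]; case: g4 => [[] []].
Qed.

Lemma leaf_neq i j : (i < 4)%N -> (j < 4)%N -> i != j -> leaf i != leaf j.
Proof. by move=> hi hj hij; rewrite -val_eqE /= /leaf !inordK. Qed.

Ltac gcomp :=
  rewrite ?gsumT ?enum_ordSl ?enum_ord0 /=;
  rewrite ?gsum2 ?gsum1; try (apply: leaf_neq => //);
  rewrite ?qdecE /leaf ?inordK //;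
  repeat match goal with |- context [gadd ?x ?y] =>
    let v := eval vm_compute in (gadd x y) in
    rewrite (_ : gadd x y = v); last by vm_compute end.

Section S.
Variable C : comRingType.

Lemma feval (x : pt C) : (flin C).@[x] =
  x (qidx nG nG nG nG) + x (qidx nG nT nG nT) - x (qidx nG nG nT nT) - x (qidx nG nT nT nG).
Proof. by rewrite /flin !mevalB mevalD !mevalXU. Qed.

Lemma fparam T a : (T = T12_34 \/ T = T14_23) ->
  (forall e, a e nG = a e nT) -> (flin C).@[param T a] = 0.
Proof.
move=> hT hK; rewrite feval /param.
case: hT => ->; rewrite /splits /nt_split !big_cons !big_nil; gcomp;
  rewrite (_ : ((false,false)==gzero) = true) // -!hK; ring.
Qed.

Lemma hKof M (a : {set 'I_4} -> grp -> C) : model_params M a -> forall e, a e nG = a e nT.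
Proof. by case: M => /= h e; case: (h e). Qed.

Lemma fcone M T : (T = T12_34 \/ T = T14_23) ->
  vanishes_on (flin C) (cone (fun x => exists a, model_params M a /\ x = param T a)).
Proof.
move=> hT y [l [z [[a [ha ->]] ->]]].
have := @fparam T a hT (@hKof M a ha); rewrite !feval => H.
transitivity (l * (param T a (qidx nG nG nG nG) + param T a (qidx nG nT nG nT)
  - param T a (qidx nG nG nT nT) - param T a (qidx nG nT nT nG))); first by ring.
by rewrite H mulr0.
Qed.

Lemma fVT M T : (T = T12_34 \/ T = T14_23) -> forall v, VT M T v -> (flin C).@[v] = 0.
Proof. by move=> hT v Hv; apply: Hv; apply: fcone. Qed.
End S.

Theorem lemma4 (R : realType) (M : model) :
  ideal_of (join (VT (C := R[i]) M T12_34) (VT (C := R[i]) M T14_23))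
           (flin R[i])
  /\ ~ ideal_of (VT (C := R[i]) M T13_24) (flin R[i]).
Proof.
split.
  move=> x Hx; apply: Hx => y [v [w [Hv [Hw ->]]]].
  have := fVT (or_introl erefl) Hv; have := fVT (or_intror erefl) Hw.
  rewrite !feval => H1 H2.
  apply: etrans (_ : _ = (v (qidx nG nG nG nG) + v (qidx nG nT nG nT) - v (qidx nG nG nT nT) - v (qidx nG nT nT nG))
    + (w (qidx nG nG nG nG) + w (qidx nG nT nG nT) - w (qidx nG nG nT nT) - w (qidx nG nT nT nG))) _.
    by ring.
  by rewrite H1 H2 addr0.
pose a (e : {set 'I_4}) (g : grp) : R[i] := if g == nA then 2 else 1.
have ha : model_params M a by case: M.
move=> H.
have : (flin R[i]).@[param T13_24 a] = 0.
  apply: H => p Hp; apply: Hp; exists 1, (param T13_24 a); split.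
    by exists a.
  by apply: functional_extensionality => k; rewrite mul1r.
rewrite feval /param /splits /nt_split !big_cons !big_nil; gcomp.
rewrite (_ : ((false,false)==gzero) = true) // /a /=.
rewrite !mul1r !mulr1 (_ : 2 + 2 - 1 - 1 = 2 :> R[i]); last by ring.
by apply/eqP; rewrite pnatr_eq0.
Qed.
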